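(* Let $\gamma>-1/2$ and for $a\in\mathbb{R}$ define \[ T(a)={}_1F_1(1+\gamma;2\gamma+1;-ia)\,{}_1F_1(2+\gamma;2\gamma+2;ia)(1+\gamma)-{}_1F_1(\gamma;2\gamma+1;-ia)\,{}_1F_1(1+\gamma;2\gamma+2;ia)\,\gamma . \] Then $T(a)\neq0$ for every $a\in\mathbb{R}$.
   Context: ${}_1F_1(\alpha;\beta;z)=\sum_{k\ge0}\frac{(\alpha)_k}{(\beta)_k}\frac{z^k}{k!}$ is the confluent hypergeometric function, with $(v)_k$ the rising factorial. *)

(* Defs.v *)
From Stdlib Require Import Reals.
From Coquelicot Require Import Coquelicot.
Open Scope R_scope.

Fixpoint rising (v : R) (k : nat) : R :=
  match k with
  | O => 1
  | S k' => rising v k' * (v + INR k')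
  end.

Definition CSeries (u : nat -> C) : C :=
  (Series (fun n => Re (u n)), Series (fun n => Im (u n))).

Definition hyp1F1_term (alpha beta : R) (z : C) (k : nat) : C :=
  Cmult (RtoC (rising alpha k / rising beta k / INR (Factorial.fact k))) (pow_n z k).

Definition hyp1F1 (alpha beta : R) (z : C) : C :=
  CSeries (hyp1F1_term alpha beta z).

Definition T_fun (g a : R) : C :=
  Cminus
    (Cmult (Cmult (hyp1F1 (1 + g) (2 * g + 1) (Cmult (RtoC (- a)) Ci))
                  (hyp1F1 (2 + g) (2 * g + 2) (Cmult (RtoC a) Ci)))
           (RtoC (1 + g)))
    (Cmult (Cmult (hyp1F1 g (2 * g + 1) (Cmult (RtoC (- a)) Ci))
                  (hyp1F1 (1 + g) (2 * g + 2) (Cmult (RtoC a) Ci)))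
           (RtoC g)).

(* Main.v *)
Require Import Defs.
From Stdlib Require Import Reals Lra Lia.
From Coquelicot Require Import Coquelicot.
Open Scope R_scope.

Lemma CV_radius_dom (a d : nat -> R) :
  (forall n, Rabs (a n) <= Rabs (d n)) -> CV_radius d = p_infty -> CV_radius a = p_infty.
Proof.
  intros Hd Hr.
  assert (H : forall r : posreal, Rbar_le r (CV_radius a)).
  { intros r. apply CV_radius_Reals_1.
    assert (Hl : Rbar_lt r (CV_radius d)) by (rewrite Hr; exact I).
    destruct (CV_radius_Reals_0 d r Hl) as [An [l [H1 H2]]].
    exists An, l. split; [exact H1|]. intros n y Hy.
    eapply Rle_trans; [|apply (H2 n y Hy)].
    rewrite !Rabs_mult. apply Rmult_le_compat_r; [apply Rabs_pos | apply Hd]. }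
  destruct (CV_radius a) as [x| |] eqn:E.
  - exfalso. assert (Hp : 0 < Rabs x + 1) by (pose proof (Rabs_pos x); lra).
    specialize (H (mkposreal _ Hp)). simpl in H. pose proof (Rle_abs x). lra.
  - reflexivity.
  - pose proof (CV_radius_ge_0 a). rewrite E in H0. simpl in H0. contradiction.
Qed.

Lemma CV_radius_expK (K : R) : 0 < K -> CV_radius (fun k => K ^ k / INR (Factorial.fact k)) = p_infty.
Proof.
  intros HK. apply CV_radius_infinite_DAlembert.
  - intros n. apply Rgt_not_eq. unfold Rdiv. apply Rmult_lt_0_compat.
    apply pow_lt; lra. apply Rinv_0_lt_compat, INR_fact_lt_0.
  - apply is_lim_seq_ext with (fun n => K * / INR (S n)).
    + intros n. simpl pow. change (Factorial.fact (S n)) with (S n * Factorial.fact n)%nat. rewrite mult_INR.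
      assert (H1 := INR_fact_lt_0 n). assert (H2 : 0 < INR (S n)) by (apply lt_0_INR; lia).
      assert (H3 : 0 < K ^ n) by (apply pow_lt; lra).
      assert (H4 : 0 < INR (S n) * INR (Factorial.fact n)) by (apply Rmult_lt_0_compat; lra).
      replace (K * K ^ n / (INR (S n) * INR (Factorial.fact n)) / (K ^ n / INR (Factorial.fact n)))
        with (K * / INR (S n)) by (field; repeat split; lra).
      rewrite Rabs_pos_eq; [reflexivity|].
      left. apply Rmult_lt_0_compat; [lra|]. apply Rinv_0_lt_compat; lra.
    + replace (Finite 0) with (Rbar_mult K 0) by (simpl; f_equal; ring).
      apply is_lim_seq_scal_l.
      replace (Finite 0) with (Rbar_inv p_infty) by reflexivity.
      apply is_lim_seq_inv; [|discriminate].
      apply (is_lim_seq_incr_1 INR p_infty). apply is_lim_seq_INR.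
Qed.

Definition cf (al be : R) (k : nat) : R :=
  rising al k / rising be k / INR (Factorial.fact k).

Fixpoint ire (k : nat) : R := match k with O => 1 | S j => - iim j end
with iim (k : nat) : R := match k with O => 0 | S j => ire j end.

Lemma rising_pos be k : 0 < be -> 0 < rising be k.
Proof.
  intros H. induction k; simpl. lra.
  apply Rmult_lt_0_compat; auto. pose proof (pos_INR k). lra.
Qed.

Lemma rising_S al k : rising al (S k) = al * rising (al + 1) k.
Proof.
  induction k.
  - simpl. ring.
  - change (rising al (S (S k))) with (rising al (S k) * (al + INR (S k))).
    rewrite IHk, S_INR. change (rising (al + 1) (S k)) with (rising (al + 1) k * (al + 1 + INR k)). ring.
Qed.

Lemma rising_D al k : rising (al + 1) (S k) = rising al (S k) + INR (S k) * rising (al + 1) k.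
Proof.
  rewrite (rising_S al k), S_INR.
  change (rising (al+1) (S k)) with (rising (al+1) k * (al + 1 + INR k)). ring.
Qed.

Lemma fact_pos k : 0 < INR (Factorial.fact k).
Proof. apply INR_fact_lt_0. Qed.

Lemma fact_S k : INR (Factorial.fact (S k)) = INR (S k) * INR (Factorial.fact k).
Proof. change (Factorial.fact (S k)) with (S k * Factorial.fact k)%nat. apply mult_INR. Qed.

Lemma G_D1 al be k : 0 < be ->
  INR (S k) * cf al be (S k) = al / be * cf (al + 1) (be + 1) k.
Proof.
  intros Hb. unfold cf. rewrite fact_S, (rising_S al), (rising_S be).
  pose proof (rising_pos (be+1) k ltac:(lra)). pose proof (fact_pos k).
  assert (0 < INR (S k)) by (apply lt_0_INR; lia).
  field. repeat split; lra.
Qed.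

Lemma G_B1 al be j : 0 < be ->
  cf (al + 1) be (S j) = cf al be (S j) + cf (al + 1) (be + 1) j / be.
Proof.
  intros Hb. unfold cf. rewrite rising_D, fact_S, (rising_S be).
  pose proof (rising_pos (be+1) j ltac:(lra)). pose proof (fact_pos j).
  assert (0 < INR (S j)) by (apply lt_0_INR; lia).
  field. repeat split; lra.
Qed.

Lemma G_B4 al be j : 0 < be ->
  INR (S j) * cf (al + 1) (be + 1) (S j)
  = be * cf al be (S j) - be * cf (al + 1) (be + 1) (S j) + cf (al + 1) (be + 1) j.
Proof.
  intros Hb. unfold cf. rewrite rising_D, fact_S, (rising_S be).
  change (rising (be + 1) (S j)) with (rising (be+1) j * (be + 1 + INR j)).
  pose proof (rising_pos (be+1) j ltac:(lra)). pose proof (fact_pos j).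
  assert (0 < INR (S j)) by (apply lt_0_INR; lia).
  pose proof (pos_INR j).
  rewrite S_INR in *. field. repeat split; lra.
Qed.

Lemma G_B3 al be k : 0 < be ->
  (al + 1) * cf (al + 2) (be + 1) k = (al + 1 + INR k) * cf (al + 1) (be + 1) k.
Proof.
  intros Hb. unfold cf.
  assert (E : rising (al + 1) (S k) = (al+1) * rising (al + 2) k).
  { rewrite rising_S. f_equal. f_equal. ring. }
  change (rising (al + 1) (S k)) with (rising (al+1) k * (al + 1 + INR k)) in E.
  pose proof (rising_pos (be+1) k ltac:(lra)). pose proof (fact_pos k).
  unfold Rdiv. rewrite <- !Rmult_assoc. rewrite <- E. ring.
Qed.

Lemma ire_iim_bound k : Rabs (ire k) <= 1 /\ Rabs (iim k) <= 1.
Proof.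
  induction k; simpl.
  - rewrite Rabs_R1, Rabs_R0. lra.
  - rewrite Rabs_Ropp. tauto.
Qed.

Lemma ire_iim_par k : ire k * (-1) ^ k = ire k /\ iim k * (-1) ^ k = - iim k.
Proof.
  induction k; simpl.
  - split; ring.
  - destruct IHk as [H1 H2]. split.
    + replace (- iim k * (-1 * (-1) ^ k)) with (iim k * (-1)^k) by ring. rewrite H2. ring.
    + replace (ire k * (-1 * (-1) ^ k)) with (- (ire k * (-1)^k)) by ring. rewrite H1. ring.
Qed.

Lemma rising_bound al be k : 0 < be ->
  Rabs (rising al k) <= (Rabs al / be + 1) ^ k * rising be k.
Proof.
  intros Hb. induction k.
  - simpl. rewrite Rabs_R1. lra.
  - simpl. rewrite Rabs_mult.
    set (K := Rabs al / be + 1).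
    assert (HK : 0 <= K) by (unfold K; pose proof (Rabs_pos al); 
       assert (0 <= Rabs al / be) by (apply Rdiv_le_0_compat; lra); lra).
    pose proof (pos_INR k).
    assert (H1 : Rabs (al + INR k) <= K * (be + INR k)).
    { eapply Rle_trans. apply Rabs_triang. rewrite (Rabs_pos_eq (INR k)) by lra.
      unfold K. assert (0 <= Rabs al / be) by (apply Rdiv_le_0_compat; [apply Rabs_pos|lra]).
      assert (E : (Rabs al / be + 1) * (be + INR k) = Rabs al + (Rabs al / be) * INR k + be + INR k)
        by (field; lra).
      rewrite E. assert (0 <= Rabs al / be * INR k) by (apply Rmult_le_pos; lra). lra. }
    replace (K * K ^ k * (rising be k * (be + INR k))) with ((K ^ k * rising be k) * (K * (be + INR k))) by ring.
    apply Rmult_le_compat; try apply Rabs_pos; assumption.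
Qed.

Lemma cf_bound al be k : 0 < be ->
  Rabs (cf al be k) <= Rabs ((Rabs al / be + 1) ^ k / INR (Factorial.fact k)).
Proof.
  intros Hb. unfold cf.
  pose proof (rising_pos be k Hb). pose proof (fact_pos k).
  assert (HK : 0 < Rabs al / be + 1) by
    (assert (0 <= Rabs al / be) by (apply Rdiv_le_0_compat; [apply Rabs_pos|lra]); lra).
  rewrite (Rabs_pos_eq ((Rabs al / be + 1) ^ k / INR (Factorial.fact k))).
  2:{ apply Rdiv_le_0_compat; [apply pow_le; lra| lra]. }
  unfold Rdiv. rewrite !Rabs_mult, !Rabs_inv, (Rabs_pos_eq (rising be k)) by lra.
  rewrite (Rabs_pos_eq (INR _)) by lra.
  apply Rmult_le_compat_r. left; apply Rinv_0_lt_compat; lra.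
  apply (Rmult_le_reg_r (rising be k)); [lra|].
  rewrite Rmult_assoc, Rinv_l by lra. rewrite Rmult_1_r. apply rising_bound; lra.
Qed.

Definition wre al be k := cf al be k * ire k.
Definition wim al be k := cf al be k * iim k.

Lemma rad_re al be : 0 < be -> CV_radius (wre al be) = p_infty.
Proof.
  intros Hb. apply CV_radius_dom with (fun k => (Rabs al / be + 1) ^ k / INR (Factorial.fact k)).
  - intros n. unfold wre. rewrite Rabs_mult.
    destruct (ire_iim_bound n) as [H _].
    pose proof (Rabs_pos (cf al be n)). pose proof (cf_bound al be n Hb). nra.
  - apply CV_radius_expK.
    assert (0 <= Rabs al / be) by (apply Rdiv_le_0_compat; [apply Rabs_pos|lra]); lra.
Qed.

Lemma rad_im al be : 0 < be -> CV_radius (wim al be) = p_infty.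
Proof.
  intros Hb. apply CV_radius_dom with (fun k => (Rabs al / be + 1) ^ k / INR (Factorial.fact k)).
  - intros n. unfold wim. rewrite Rabs_mult.
    destruct (ire_iim_bound n) as [_ H].
    pose proof (Rabs_pos (cf al be n)). pose proof (cf_bound al be n Hb). nra.
  - apply CV_radius_expK.
    assert (0 <= Rabs al / be) by (apply Rdiv_le_0_compat; [apply Rabs_pos|lra]); lra.
Qed.

Lemma pow_ai a k : pow_n (Cmult (RtoC a) Ci) k = (a ^ k * ire k, a ^ k * iim k).
Proof.
  induction k.
  - simpl. unfold one. simpl. unfold RtoC. f_equal; ring.
  - simpl pow_n. rewrite IHk. change mult with Cmult. unfold Cmult, RtoC, Ci. simpl. f_equal; ring.
Qed.

Lemma hyp_CPS al be a :
  hyp1F1 al be (Cmult (RtoC a) Ci) = (PSeries (wre al be) a, PSeries (wim al be) a).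
Proof.
  unfold hyp1F1, CSeries, PSeries. f_equal; apply Series_ext; intros k;
  unfold hyp1F1_term; rewrite pow_ai; unfold wre, wim, cf, Cmult, RtoC; simpl; ring.
Qed.

Lemma ex_series_Rmult_l (c : R) (a : nat -> R) : ex_series a -> ex_series (fun n => c * a n).
Proof.
  intros H. apply (ex_series_ext (fun n => scal c (a n))).
  - intros n. reflexivity.
  - exact (@ex_series_scal_l R_AbsRing R_NormedModule c a H).
Qed.

Lemma ex_series_Rplus (a b : nat -> R) : ex_series a -> ex_series b -> ex_series (fun n => a n + b n).
Proof.
  intros Ha Hb. exact (@ex_series_plus R_AbsRing R_NormedModule a b Ha Hb).
Qed.

Lemma PS_lin3 (u v1 v2 v3 : nat -> R) (c1 c2 c3 x : R) :
  CV_radius v1 = p_infty -> CV_radius v2 = p_infty -> CV_radius v3 = p_infty ->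
  (forall k, u k = c1 * v1 k + c2 * v2 k + c3 * v3 k) ->
  PSeries u x = c1 * PSeries v1 x + c2 * PSeries v2 x + c3 * PSeries v3 x.
Proof.
  intros H1 H2 H3 Hk.
  assert (E : forall v, CV_radius v = p_infty -> ex_series (fun k => v k * x ^ k)).
  { intros v Hv. assert (Hl : Rbar_lt (Rabs x) (CV_radius v)) by (rewrite Hv; exact I).
    pose proof (CV_radius_inside v x Hl) as [l Hl'].
    exists l. apply is_series_ext with (2 := Hl'). intros n. unfold scal; simpl.
    rewrite pow_n_pow. unfold mult; simpl. ring. }
  unfold PSeries.
  rewrite (Series_ext _ (fun k => (c1 * (v1 k * x ^ k) + c2 * (v2 k * x ^ k)) + c3 * (v3 k * x ^ k))).
  2:{ intros k. rewrite Hk. ring. }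
  rewrite Series_plus, Series_plus, !Series_scal_l; try reflexivity.
  - apply ex_series_Rmult_l. apply E; assumption.
  - apply ex_series_Rmult_l. apply E; assumption.
  - apply ex_series_Rplus; apply ex_series_Rmult_l; apply E; assumption.
  - apply ex_series_Rmult_l. apply E; assumption.
Qed.

Lemma cf0 al be : cf al be 0 = 1.
Proof. unfold cf. simpl. field. Qed.

Section Coefs.
Variables (al be : R).
Hypothesis Hb : 0 < be.

Lemma D1re k : PS_derive (wre al be) k = -(al/be) * wim (al+1) (be+1) k.
Proof.
  unfold PS_derive, wre, wim. simpl ire.
  replace (- (al / be) * (cf (al + 1) (be + 1) k * iim k)) with (- (al / be * cf (al + 1) (be + 1) k) * iim k) by ring.
  rewrite <- (G_D1 al be k Hb). ring.
Qed.

Lemma D1im k : PS_derive (wim al be) k = (al/be) * wre (al+1) (be+1) k.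
Proof.
  unfold PS_derive, wre, wim. simpl iim.
  replace (al / be * (cf (al + 1) (be + 1) k * ire k)) with ((al / be * cf (al + 1) (be + 1) k) * ire k) by ring.
  rewrite <- (G_D1 al be k Hb). ring.
Qed.

Lemma I1re k : wre (al+1) be k = 1 * wre al be k + (-(1/be)) * PS_incr_1 (wim (al+1) (be+1)) k + 0 * wre al be k.
Proof.
  destruct k as [|j].
  - unfold wre. rewrite !cf0. simpl. unfold zero; simpl. ring.
  - unfold wre, wim. simpl PS_incr_1. simpl ire. rewrite G_B1 by exact Hb. field. lra.
Qed.

Lemma I1im k : wim (al+1) be k = 1 * wim al be k + (1/be) * PS_incr_1 (wre (al+1) (be+1)) k + 0 * wim al be k.
Proof.
  destruct k as [|j].
  - unfold wim. rewrite !cf0. simpl. unfold zero; simpl. ring.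
  - unfold wre, wim. simpl PS_incr_1. simpl iim. rewrite G_B1 by exact Hb. field. lra.
Qed.

Lemma sk_rel k : INR k * cf (al+1) (be+1) k = be * cf al be k - be * cf (al+1) (be+1) k
   + match k with O => 0 | S j => cf (al+1) (be+1) j end.
Proof.
  destruct k as [|j].
  - rewrite !cf0. simpl. ring.
  - apply G_B4; exact Hb.
Qed.

Lemma q_rel k : (al+1) * cf (al+2) (be+1) k = be * cf al be k + (al + 1 - be) * cf (al+1) (be+1) k
   + match k with O => 0 | S j => cf (al+1) (be+1) j end.
Proof.
  rewrite G_B3 by exact Hb. pose proof (sk_rel k). lra.
Qed.

Lemma I2re k : (al+1) * wre (al+2) (be+1) k
  = be * wre al be k + (al + 1 - be) * wre (al+1) (be+1) k + (-1) * PS_incr_1 (wim (al+1) (be+1)) k.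
Proof.
  unfold wre. rewrite <- Rmult_assoc, q_rel.
  destruct k as [|j]; simpl PS_incr_1; simpl ire; unfold wim; try (unfold zero; simpl); ring.
Qed.

Lemma I2im k : (al+1) * wim (al+2) (be+1) k
  = be * wim al be k + (al + 1 - be) * wim (al+1) (be+1) k + 1 * PS_incr_1 (wre (al+1) (be+1)) k.
Proof.
  unfold wim. rewrite <- Rmult_assoc, q_rel.
  destruct k as [|j]; simpl PS_incr_1; simpl iim; unfold wre; try (unfold zero; simpl); ring.
Qed.

Lemma D2re k : @eq R (PS_incr_1 (PS_derive (wre (al+1) (be+1))) k)
  ( be * wre al be k + (- be) * wre (al+1) (be+1) k + (-1) * PS_incr_1 (wim (al+1) (be+1)) k).
Proof.
  destruct k as [|j].
  - simpl. unfold zero; simpl. unfold wre. rewrite !cf0. simpl. ring.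
  - simpl PS_incr_1. unfold PS_derive, wre, wim.
    pose proof (sk_rel (S j)) as H. simpl ire. cbv beta iota in H.
    replace (INR (S j) * (cf (al + 1) (be + 1) (S j) * - iim j)) with (- (INR (S j) * cf (al + 1) (be + 1) (S j)) * iim j) by ring.
    rewrite H. ring.
Qed.

Lemma D2im k : @eq R (PS_incr_1 (PS_derive (wim (al+1) (be+1))) k)
  ( be * wim al be k + (- be) * wim (al+1) (be+1) k + 1 * PS_incr_1 (wre (al+1) (be+1)) k).
Proof.
  destruct k as [|j].
  - simpl. unfold zero; simpl. unfold wim. rewrite !cf0. simpl. ring.
  - simpl PS_incr_1. unfold PS_derive, wre, wim.
    pose proof (sk_rel (S j)) as H. simpl iim. cbv beta iota in H.
    replace (INR (S j) * (cf (al + 1) (be + 1) (S j) * ire j)) with ((INR (S j) * cf (al + 1) (be + 1) (S j)) * ire j) by ring.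
    rewrite H. ring.
Qed.

End Coefs.

Ltac subst_der H := match type of H with is_derive ?f ?x ?l =>
  replace (Derive (fun t : R => f t) x) with l by (symmetry; apply is_derive_unique; exact H) end.

Lemma par_re al be a : PSeries (wre al be) (-a) = PSeries (wre al be) a.
Proof.
  unfold PSeries. apply Series_ext. intros k. unfold wre.
  replace ((-a)^k) with ((-1)^k * a^k) by (rewrite <- Rpow_mult_distr; f_equal; ring).
  destruct (ire_iim_par k) as [H _].
  replace (cf al be k * ire k * ((-1) ^ k * a ^ k)) with (cf al be k * (ire k * (-1)^k) * a ^ k) by ring.
  rewrite H. ring.
Qed.

Lemma par_im al be a : PSeries (wim al be) (-a) = - PSeries (wim al be) a.
Proof.
  unfold PSeries. rewrite <- Series_opp. apply Series_ext. intros k. unfold wim.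
  replace ((-a)^k) with ((-1)^k * a^k) by (rewrite <- Rpow_mult_distr; f_equal; ring).
  destruct (ire_iim_par k) as [_ H].
  replace (cf al be k * iim k * ((-1) ^ k * a ^ k)) with (cf al be k * (iim k * (-1)^k) * a ^ k) by ring.
  rewrite H. ring.
Qed.

Section Funs.
Variables (al be : R).
Hypothesis Hb : 0 < be.

Definition x1 a := PSeries (wre al be) a.
Definition x2 a := PSeries (wim al be) a.
Definition y1 a := PSeries (wre (al+1) (be+1)) a.
Definition y2 a := PSeries (wim (al+1) (be+1)) a.

Let Hb1 : 0 < be + 1. Proof. lra. Qed.
Let rR1 := rad_re al be Hb.
Let rR2 := rad_im al be Hb.
Let rS1 := rad_re (al+1) (be+1) Hb1.
Let rS2 := rad_im (al+1) (be+1) Hb1.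
Let rS1i : CV_radius (PS_incr_1 (wre (al+1) (be+1))) = p_infty.
Proof. rewrite CV_radius_incr_1. exact rS1. Qed.
Let rS2i : CV_radius (PS_incr_1 (wim (al+1) (be+1))) = p_infty.
Proof. rewrite CV_radius_incr_1. exact rS2. Qed.

Lemma lt_inf (v : nat -> R) x : CV_radius v = p_infty -> Rbar_lt (Rabs x) (CV_radius v).
Proof. intros H; rewrite H; exact I. Qed.

Lemma dx1 t : is_derive x1 t (-(al/be) * y2 t).
Proof.
  unfold x1. replace (-(al/be) * y2 t) with (PSeries (PS_derive (wre al be)) t).
  - apply is_derive_PSeries, lt_inf, rR1.
  - unfold y2. rewrite (PS_lin3 _ (wim (al+1) (be+1)) (wim (al+1) (be+1)) (wim (al+1) (be+1)) (-(al/be)) 0 0 t); auto.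
    ring. intros k. rewrite D1re by exact Hb. ring.
Qed.

Lemma dx2 t : is_derive x2 t ((al/be) * y1 t).
Proof.
  unfold x2. replace ((al/be) * y1 t) with (PSeries (PS_derive (wim al be)) t).
  - apply is_derive_PSeries, lt_inf, rR2.
  - unfold y1. rewrite (PS_lin3 _ (wre (al+1) (be+1)) (wre (al+1) (be+1)) (wre (al+1) (be+1)) (al/be) 0 0 t); auto.
    ring. intros k. rewrite D1im by exact Hb. ring.
Qed.

Definition dy1 t := PSeries (PS_derive (wre (al+1) (be+1))) t.
Definition dy2 t := PSeries (PS_derive (wim (al+1) (be+1))) t.

Lemma dy1_d t : is_derive y1 t (dy1 t).
Proof. apply is_derive_PSeries, lt_inf, rS1. Qed.
Lemma dy2_d t : is_derive y2 t (dy2 t).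
Proof. apply is_derive_PSeries, lt_inf, rS2. Qed.

Lemma dy1_eq t : t * dy1 t = be * x1 t - be * y1 t - t * y2 t.
Proof.
  unfold dy1. rewrite <- PSeries_incr_1.
  rewrite (PS_lin3 _ (wre al be) (wre (al+1) (be+1)) (PS_incr_1 (wim (al+1) (be+1))) be (-be) (-1) t); auto.
  - unfold y2. rewrite PSeries_incr_1. unfold x1, y1. ring.
  - intros k. apply D2re; exact Hb.
Qed.

Lemma dy2_eq t : t * dy2 t = be * x2 t - be * y2 t + t * y1 t.
Proof.
  unfold dy2. rewrite <- PSeries_incr_1.
  rewrite (PS_lin3 _ (wim al be) (wim (al+1) (be+1)) (PS_incr_1 (wre (al+1) (be+1))) be (-be) 1 t); auto.
  - unfold y1. rewrite PSeries_incr_1. unfold x2, y2. ring.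
  - intros k. apply D2im; exact Hb.
Qed.

Lemma P1_eq t : PSeries (wre (al+1) be) t = x1 t - (1/be) * t * y2 t.
Proof.
  rewrite (PS_lin3 _ (wre al be) (PS_incr_1 (wim (al+1) (be+1))) (wre al be) 1 (-(1/be)) 0 t); auto.
  - unfold y2. rewrite PSeries_incr_1. unfold x1. ring.
  - intros k. apply I1re; exact Hb.
Qed.

Lemma P2_eq t : PSeries (wim (al+1) be) t = x2 t + (1/be) * t * y1 t.
Proof.
  rewrite (PS_lin3 _ (wim al be) (PS_incr_1 (wre (al+1) (be+1))) (wim al be) 1 (1/be) 0 t); auto.
  - unfold y1. rewrite PSeries_incr_1. unfold x2. ring.
  - intros k. apply I1im; exact Hb.
Qed.

Lemma Q1_eq t : (al+1) * PSeries (wre (al+2) (be+1)) t = be * x1 t + (al + 1 - be) * y1 t - t * y2 t.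
Proof.
  rewrite <- PSeries_scal.
  rewrite (PS_lin3 _ (wre al be) (wre (al+1) (be+1)) (PS_incr_1 (wim (al+1) (be+1))) be (al+1-be) (-1) t); auto.
  - unfold y2. rewrite PSeries_incr_1. unfold x1, y1. ring.
  - intros k. unfold PS_scal, scal; simpl. unfold mult; simpl. apply I2re; exact Hb.
Qed.

Lemma Q2_eq t : (al+1) * PSeries (wim (al+2) (be+1)) t = be * x2 t + (al + 1 - be) * y2 t + t * y1 t.
Proof.
  rewrite <- PSeries_scal.
  rewrite (PS_lin3 _ (wim al be) (wim (al+1) (be+1)) (PS_incr_1 (wre (al+1) (be+1))) be (al+1-be) 1 t); auto.
  - unfold y1. rewrite PSeries_incr_1. unfold x2, y2. ring.
  - intros k. unfold PS_scal, scal; simpl. unfold mult; simpl. apply I2im; exact Hb.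
Qed.

Lemma x1_0 : x1 0 = 1.
Proof. unfold x1. rewrite PSeries_0. unfold wre. rewrite cf0. simpl. ring. Qed.
Lemma x2_0 : x2 0 = 0.
Proof. unfold x2. rewrite PSeries_0. unfold wim. rewrite cf0. simpl. ring. Qed.
Lemma y1_0 : y1 0 = 1.
Proof. unfold y1. rewrite PSeries_0. unfold wre. rewrite cf0. simpl. ring. Qed.
Lemma y2_0 : y2 0 = 0.
Proof. unfold y2. rewrite PSeries_0. unfold wim. rewrite cf0. simpl. ring. Qed.

End Funs.

Lemma Rpower_split (c b : R) : 0 < c -> Rpower c b = Rpower c (b - 1) * c.
Proof.
  intros Hc. rewrite <- (Rpower_1 c) at 3 by exact Hc. rewrite <- Rpower_plus. f_equal. ring.
Qed.

Lemma Rpower_pos (c b : R) : 0 < Rpower c b.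
Proof. unfold Rpower. apply exp_pos. Qed.

Lemma mono (b : R) (f df : R -> R) : 0 < b ->
  (forall t, is_derive f t (df t)) ->
  (forall t, 0 < t -> t * df t + b * f t >= 0) ->
  forall t a, 0 < t -> t <= a -> Rpower t b * f t <= Rpower a b * f a.
Proof.
  intros Hb Hd Hode t a Ht Hta.
  destruct (Req_dec t a) as [E|Hne]; [subst; lra|].
  set (h := fun s => Rpower s b * f s).
  set (dh := fun s => b * Rpower s (b - 1) * f s + Rpower s b * df s).
  assert (Hh : forall s, 0 < s -> is_derive h s (dh s)).
  { intros s Hs. unfold h, dh.
    assert (H1 : is_derive (fun s => Rpower s b) s (b * Rpower s (b - 1))).
    { apply is_derive_Reals. apply derivable_pt_lim_power. exact Hs. }
    pose proof (is_derive_mult _ _ _ _ _ H1 (Hd s) Rmult_comm) as H2.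
    apply (is_derive_ext _ _ _ _ (fun _ => eq_refl)) in H2.
    replace (b * Rpower s (b - 1) * f s + Rpower s b * df s) with
      (plus (mult (b * Rpower s (b - 1)) (f s)) (mult (Rpower s b) (df s))).
    exact H2. reflexivity. }
  destruct (MVT_gen h t a dh) as [c [Hc Heq]].
  - intros x Hx. apply Hh. rewrite Rmin_left in Hx by lra. lra.
  - intros x Hx. rewrite Rmin_left in Hx by lra.
    apply continuity_pt_filterlim. apply (ex_derive_continuous h).
    eexists. apply Hh. lra.
  - rewrite Rmin_left in Hc by lra. rewrite Rmax_right in Hc by lra.
    assert (Hc0 : 0 < c) by lra.
    assert (Hdh : dh c >= 0).
    { unfold dh. rewrite (Rpower_split c b) by exact Hc0.
      replace (b * Rpower c (b - 1) * f c + Rpower c (b - 1) * c * df c)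
        with (Rpower c (b - 1) * (c * df c + b * f c)) by ring.
      pose proof (Rpower_pos c (b-1)). pose proof (Hode c Hc0). nra. }
    unfold h in Heq. nra.
Qed.

Lemma pos_right (b : R) (f df : R -> R) : 0 < b ->
  (forall t, is_derive f t (df t)) ->
  (forall t, 0 < t -> t * df t + b * f t >= 0) ->
  0 < f 0 -> forall a, 0 < a -> 0 < f a.
Proof.
  intros Hb Hd Hode H0 a Ha.
  assert (Hc : continuity_pt f 0).
  { apply continuity_pt_filterlim. apply (ex_derive_continuous f). eexists. apply Hd. }
  pose proof (proj1 (continuity_pt_locally f 0) Hc) as Hc2. clear Hc. rename Hc2 into Hc.
  destruct (Hc (mkposreal _ H0)) as [d Hdd]. simpl in Hdd.
  set (t := Rmin a (d/2)).
  assert (Ht : 0 < t) by (unfold t; apply Rmin_glb_lt; [lra| destruct d; simpl; lra]).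
  assert (Hta : t <= a) by (unfold t; apply Rmin_l).
  assert (Hft : 0 < f t).
  { assert (Hb' : ball 0 d t).
    { unfold ball; simpl. unfold AbsRing_ball, abs, minus, plus, opp; simpl.
      replace (t + - 0) with t by ring. rewrite Rabs_pos_eq by lra. unfold t. pose proof (Rmin_r a (d/2)).
      destruct d; simpl in *; lra. }
    specialize (Hdd t Hb'). apply Rabs_def2 in Hdd. lra. }
  pose proof (mono b f df Hb Hd Hode t a Ht Hta).
  pose proof (Rpower_pos t b). pose proof (Rpower_pos a b).
  assert (0 < Rpower t b * f t) by nra. nra.
Qed.

Lemma zero_right (b : R) (f df : R -> R) : 0 < b ->
  (forall t, is_derive f t (df t)) ->
  (forall t, 0 < t -> t * df t + b * f t = 0) ->
  f 0 = 0 -> forall a, 0 < a -> f a = 0.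
Proof.
  intros Hb Hd Hode H0 a Ha.
  assert (Hm1 := mono b f df Hb Hd ltac:(intros t Ht; rewrite Hode; lra)).
  assert (Hm2 := mono b (fun t => - f t) (fun t => - df t) Hb
     ltac:(intros t; apply (is_derive_opp f t (df t)), Hd)
     ltac:(intros t Ht; pose proof (Hode t Ht); lra)).
  destruct (Req_dec (f a) 0) as [E|Hne]; [exact E|exfalso].
  assert (Hpa : 0 < Rabs (f a)) by (apply Rabs_pos_lt; exact Hne).
  assert (Hc : continuity_pt f 0).
  { apply continuity_pt_filterlim. apply (ex_derive_continuous f). eexists. apply Hd. }
  pose proof (proj1 (continuity_pt_locally f 0) Hc) as Hc2. clear Hc. rename Hc2 into Hc.
  destruct (Hc (mkposreal _ Hpa)) as [d Hdd]. simpl in Hdd.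
  set (t := Rmin a (d/2)).
  assert (Ht : 0 < t) by (unfold t; apply Rmin_glb_lt; [lra| destruct d; simpl; lra]).
  assert (Hta : t <= a) by (unfold t; apply Rmin_l).
  assert (Hft : Rabs (f t) < Rabs (f a)).
  { assert (Hb' : ball 0 d t).
    { unfold ball; simpl. unfold AbsRing_ball, abs, minus, plus, opp; simpl.
      replace (t + - 0) with t by ring. rewrite Rabs_pos_eq by lra. unfold t. pose proof (Rmin_r a (d/2)).
      destruct d; simpl in *; lra. }
    specialize (Hdd t Hb'). rewrite H0, Rminus_0_r in Hdd. exact Hdd. }
  specialize (Hm1 t a Ht Hta). specialize (Hm2 t a Ht Hta). simpl in Hm2.
  assert (E : Rpower t b * f t = Rpower a b * f a) by lra.
  pose proof (Rpower_pos t b). pose proof (Rpower_pos a b).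
  pose proof (Rle_Rpower_l t a b ltac:(lra) ltac:(lra)).
  assert (E2 : Rpower t b * Rabs (f t) = Rpower a b * Rabs (f a)).
  { rewrite <- (Rabs_pos_eq (Rpower t b)) by lra. rewrite <- (Rabs_pos_eq (Rpower a b)) by lra.
    rewrite <- !Rabs_mult. rewrite E. reflexivity. }
  pose proof (Rabs_pos (f t)). nra.
Qed.

Lemma refl_der (f df : R -> R) : (forall t, is_derive f t (df t)) ->
  forall t, is_derive (fun s => f (- s)) t (- df (- t)).
Proof.
  intros Hd t. pose proof (Hd (-t)) as H.
  auto_derive.
  - eexists; exact H.
  - subst_der H. ring.
Qed.

Lemma pos_all (b : R) (f df : R -> R) : 0 < b ->
  (forall t, is_derive f t (df t)) ->
  (forall t, t * df t + b * f t >= 0) ->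
  0 < f 0 -> forall a, 0 < f a.
Proof.
  intros Hb Hd Hode H0 a.
  destruct (Rtotal_order a 0) as [Ha|[Ha|Ha]].
  - pose proof (pos_right b (fun s => f (-s)) (fun s => - df (- s)) Hb (refl_der f df Hd)
      ltac:(intros t _; pose proof (Hode (-t)); lra) ltac:(simpl; rewrite Ropp_0; exact H0) (-a) ltac:(lra)) as H.
    simpl in H. first [exact H | (rewrite Ropp_involutive in H; exact H)].
  - subst; exact H0.
  - apply (pos_right b f df Hb Hd); auto.
Qed.

Lemma zero_all (b : R) (f df : R -> R) : 0 < b ->
  (forall t, is_derive f t (df t)) ->
  (forall t, t * df t + b * f t = 0) ->
  forall a, f a = 0.
Proof.
  intros Hb Hd Hode a.
  assert (H0 : f 0 = 0) by (pose proof (Hode 0); nra).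
  destruct (Rtotal_order a 0) as [Ha|[Ha|Ha]].
  - pose proof (zero_right b (fun s => f (-s)) (fun s => - df (- s)) Hb (refl_der f df Hd)
      ltac:(intros t _; pose proof (Hode (-t)); lra) ltac:(simpl; rewrite Ropp_0; exact H0) (-a) ltac:(lra)) as H.
    simpl in H. first [exact H | (rewrite Ropp_involutive in H; exact H)].
  - subst; exact H0.
  - apply (zero_right b f df Hb Hd); auto.
Qed.

Definition Fn al be t := be * (x1 al be t ^ 2 + x2 al be t ^ 2)
  - 2 * al * (x1 al be t * y1 al be t + x2 al be t * y2 al be t).
Definition dFn al be t :=
  be * (2 * x1 al be t * (-(al/be) * y2 al be t) + 2 * x2 al be t * ((al/be) * y1 al be t))
  - 2 * al * ((-(al/be) * y2 al be t) * y1 al be t + x1 al be t * dy1 al be t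
              + ((al/be) * y1 al be t) * y2 al be t + x2 al be t * dy2 al be t).
Definition Cn al be t := 2 * be * (x1 al be t * y2 al be t - x2 al be t * y1 al be t)
  - t * (y1 al be t ^ 2 + y2 al be t ^ 2).
Definition dCn al be t :=
  2 * be * ((-(al/be) * y2 al be t) * y2 al be t + x1 al be t * dy2 al be t
            - ((al/be) * y1 al be t) * y1 al be t - x2 al be t * dy1 al be t)
  - (y1 al be t ^ 2 + y2 al be t ^ 2)
  - t * (2 * y1 al be t * dy1 al be t + 2 * y2 al be t * dy2 al be t).

Lemma Fn_der al be (Hb : 0 < be) t : is_derive (Fn al be) t (dFn al be t).
Proof.
  pose proof (dx1 al be Hb t) as H1. pose proof (dx2 al be Hb t) as H2.
  pose proof (dy1_d al be Hb t) as H3. pose proof (dy2_d al be Hb t) as H4.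
  unfold Fn, dFn. auto_derive.
  - repeat first [exact I | split | (eexists; eassumption)].
  - subst_der H1. subst_der H2. subst_der H3. subst_der H4. ring.
Qed.

Lemma Cn_der al be (Hb : 0 < be) t : is_derive (Cn al be) t (dCn al be t).
Proof.
  pose proof (dx1 al be Hb t) as H1. pose proof (dx2 al be Hb t) as H2.
  pose proof (dy1_d al be Hb t) as H3. pose proof (dy2_d al be Hb t) as H4.
  unfold Cn, dCn. auto_derive.
  - repeat first [exact I | split | (eexists; eassumption)].
  - subst_der H1. subst_der H2. subst_der H3. subst_der H4. ring.
Qed.

Lemma Fn_ode al be (Hb : 0 < be) (Hbe : be = 2 * al + 1) t :
  t * dFn al be t + be * Fn al be t = be * (x1 al be t ^ 2 + x2 al be t ^ 2).
Proof.
  pose proof (dy1_eq al be Hb t) as E1. pose proof (dy2_eq al be Hb t) as E2.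
  unfold dFn, Fn.
  set (X1 := x1 al be t) in *. set (X2 := x2 al be t) in *.
  set (Y1 := y1 al be t) in *. set (Y2 := y2 al be t) in *.
  set (D1 := dy1 al be t) in *. set (D2 := dy2 al be t) in *.
  replace (t * (be * (2 * X1 * (- (al / be) * Y2) + 2 * X2 * (al / be * Y1)) -
     2 * al * (- (al / be) * Y2 * Y1 + X1 * D1 + al / be * Y1 * Y2 + X2 * D2)))
   with (be * t * (2 * X1 * (- (al / be) * Y2) + 2 * X2 * (al / be * Y1)) -
     2 * al * (X1 * (t * D1) + X2 * (t * D2))) by (field; lra).
  rewrite E1, E2. subst be. field. lra.
Qed.

Lemma Cn_ode al be (Hb : 0 < be) (Hbe : be = 2 * al + 1) t :
  t * dCn al be t + be * Cn al be t = 0.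
Proof.
  pose proof (dy1_eq al be Hb t) as E1. pose proof (dy2_eq al be Hb t) as E2.
  unfold dCn, Cn.
  set (X1 := x1 al be t) in *. set (X2 := x2 al be t) in *.
  set (Y1 := y1 al be t) in *. set (Y2 := y2 al be t) in *.
  set (D1 := dy1 al be t) in *. set (D2 := dy2 al be t) in *.
  replace (t * (2 * be * (- (al / be) * Y2 * Y2 + X1 * D2 - al / be * Y1 * Y1 - X2 * D1) -
    (Y1 ^ 2 + Y2 ^ 2) - t * (2 * Y1 * D1 + 2 * Y2 * D2)))
   with (2 * be * (t * (- (al / be) * Y2 * Y2 - al / be * Y1 * Y1) + X1 * (t * D2) - X2 * (t * D1)) -
    t * (Y1 ^ 2 + Y2 ^ 2) - t * (2 * Y1 * (t * D1) + 2 * Y2 * (t * D2))) by (field; lra).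
  rewrite E1, E2. subst be. field. lra.
Qed.

Lemma Fn_pos al be (Hb : 0 < be) (Hbe : be = 2 * al + 1) a : 0 < Fn al be a.
Proof.
  apply (pos_all be (Fn al be) (dFn al be) Hb (Fn_der al be Hb)).
  - intros t. rewrite Fn_ode by assumption.
    pose proof (pow2_ge_0 (x1 al be t)). pose proof (pow2_ge_0 (x2 al be t)). nra.
  - unfold Fn. rewrite x1_0, x2_0, y1_0, y2_0. lra.
Qed.

Lemma Cn_zero al be (Hb : 0 < be) (Hbe : be = 2 * al + 1) a : Cn al be a = 0.
Proof.
  apply (zero_all be (Cn al be) (dCn al be) Hb (Cn_der al be Hb)).
  intros t. apply Cn_ode; assumption.
Qed.

Theorem lemma2p3 (g : R) (hg : -1/2 < g) (a : R) : T_fun g a <> RtoC 0.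
Proof.
  intros HT. apply (f_equal fst) in HT.
  set (be := 2 * g + 1).
  assert (Hb : 0 < be) by (unfold be; lra).
  assert (Hbe : be = 2 * g + 1) by reflexivity.
  unfold T_fun in HT.
  replace (1 + g) with (g + 1) in HT by ring.
  replace (2 + g) with (g + 2) in HT by ring.
  replace (2 * g + 2) with (be + 1) in HT by (unfold be; ring).
  fold be in HT.
  rewrite !hyp_CPS, !par_re, !par_im in HT.
  unfold Cminus, Cmult, Cplus, Copp, RtoC in HT. simpl in HT.
  pose proof (P1_eq g be Hb a) as P1. pose proof (P2_eq g be Hb a) as P2.
  pose proof (Q1_eq g be Hb a) as Q1. pose proof (Q2_eq g be Hb a) as Q2.
  pose proof (Fn_pos g be Hb Hbe a) as HF. pose proof (Cn_zero g be Hb Hbe a) as HC.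
  unfold Fn, Cn in HF, HC.
  fold (x1 g be a) (x2 g be a) (y1 g be a) (y2 g be a) in HT.
  set (X1 := x1 g be a) in *. set (X2 := x2 g be a) in *.
  set (Y1 := y1 g be a) in *. set (Y2 := y2 g be a) in *.
  set (p1 := PSeries (wre (g + 1) be) a) in *. set (p2 := PSeries (wim (g + 1) be) a) in *.
  set (q1 := PSeries (wre (g + 2) (be + 1)) a) in *. set (q2 := PSeries (wim (g + 2) (be + 1)) a) in *.
  assert (HT2 : p1 * ((g+1)*q1) + p2 * ((g+1)*q2) - g*(X1*Y1+X2*Y2) = 0) by (rewrite <- HT; ring).
  rewrite Q1, Q2, P1, P2 in HT2.
  assert (Id : forall Z, (X1 - 1 / be * a * Y2) * (be * X1 + (g + 1 - be) * Y1 - a * Y2) +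
      (X2 + 1 / be * a * Y1) * (be * X2 + (g + 1 - be) * Y2 + a * Y1) - g * (X1 * Y1 + X2 * Y2)
      = (be * (X1 ^ 2 + X2 ^ 2) - 2 * g * (X1 * Y1 + X2 * Y2))
        - (a / be) * (2 * be * (X1 * Y2 - X2 * Y1) - a * (Y1 ^ 2 + Y2 ^ 2)) + 0 * Z).
  { intros Z. clearbody be. subst be. field. lra. }
  rewrite (Id 0), HC in HT2. lra.
Qed.
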